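(* Let $F$ be a $4$-regular graph, let $E\subseteq E(F)$ be based in $F$, let $C$ be an oriented Euler system of $F$, let $D$ be a directed version of $F$, and let $\mathbf o$ be a transitional orientation of $F$. Then for each transversal $T$ of $\mathfrak T(F)$, the submatrix of $\mathrm{CM}(F,\Gamma_{E,C},D)\cdot\Delta_{D,\mathbf o}$ formed by the columns in $T$ has determinant $-1$, $0$, or $1$.
   Context: Graphs: $G=(V,H,E,\epsilon)$ with finite sets of vertices $V$ and half-edges $H$, a partition $E$ of $H$ into unordered pairs (edges), and $\epsilon:H\to V$; loops and multiple edges allowed. $E'\subseteq E(G)$ is based in $G$ if it contains exactly one edge of each connected component of $G$. A directed version orders each edge as (tail, head). A single transition is an unordered pair of distinct half-edges incident with a common vertex; a directed single transition is such an ordered pair. A closed walk is a sequence $((h_1,h_2),\dots,(h_{n-1},h_n))$ of directed single transitions with $\{h_2,h_3\},\{h_4,h_5\},\dots,\{h_n,h_1\}$ edges, up to cyclic shift. $\sigma(D,W)\in\mathbb Z^{E}$ counts, at each edge, traversals by $W$ along its direction in $D$ minus traversals against it. An oriented circuit is a nonempty closed walk in which each half-edge occurs at most once. For a set $\Gamma$ of closed walks, $\mathrm{CM}(G,\Gamma,D)$ is the $\Gamma\times E(G)$ matrix whose row indexed by $W$ is $\sigma(D,W)$ (rows/columns unordered; determinants are defined up to sign). $F$ is $4$-regular if every vertex is incident with exactly $4$ half-edges. A transition at $v$ is a partition of the four half-edges at $v$ into two single transitions; $\mathfrak T(F)$ is the set of transitions, and a transversal of $\mathfrak T(F)$ contains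 exactly one transition at each vertex. A transitional orientation $\mathbf o$ assigns to each transition $t$ one of its two single transitions $\mathbf o(t)$. $\Delta_{D,\mathbf o}$ is the $E(F)\times\mathfrak T(F)$ matrix over $\mathbb Q$ whose $(e,t)$ entry is $1$ if $e\cap\mathbf o(t)=\{h\}$ with $h$ the tail of $e$ in $D$, $-1$ if $e\cap\mathbf o(t)=\{h\}$ with $h$ the head, and $0$ otherwise. An oriented Euler system of $F$ consists of one oriented Eulerian circuit for each connected component of $F$; it visits each vertex exactly twice. For a vertex $v$, the oriented circuit induced by $C$ at $v$ based on $E$ is the segment from $v$ back to $v$ of the oriented Eulerian circuit of the component of $v$ that does not traverse the edge of $E$ in that component. $\Gamma_{E,C}$ is the set of these oriented circuits over all $v\in V(F)$. *)

(* Defs.v *)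
From mathcomp Require Import all_boot all_order all_algebra.
Set Implicit Arguments. Unset Strict Implicit. Unset Printing Implicit Defensive.
Import GRing.Theory.
Local Open Scope ring_scope.

Section Graphs.
Variables (V H : finType).
(* A graph G = (V, H, Ed, eps): Ed is a set of blocks of half-edges. *)
Variables (Ed : {set {set H}}) (eps : H -> V).

Definition is_graph : Prop :=
  partition Ed [set: H] /\ forall e, e \in Ed -> #|e| = 2.

Definition hat (v : V) : {set H} := [set h | eps h == v].

Definition four_regular : Prop := forall v, #|hat v| = 4.

Definition adj : rel V := fun u w =>
  [exists e in Ed, exists h in e, exists h' in e,
     [&& h != h', eps h == u & eps h' == w]].

Definition edge_in_comp (e : {set H}) (v : V) : bool :=
  [exists h in e, connect adj (eps h) v].

Definition based (E' : {set {set H}}) : Prop :=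
  E' \subset Ed /\ forall v, #|[set e in E' | edge_in_comp e v]| = 1.

(* A directed version: D is the set of tails, exactly one per edge. *)
Definition directed_version (D : {set H}) : Prop :=
  forall e, e \in Ed -> #|e :&: D| = 1.

(* Walks: a closed walk ((h1,h2),...,(h_{n-1},h_n)) is stored as the sequence
   of its directed single transitions (h1,h2), (h3,h4), ...; it is considered
   up to cyclic shift (all notions below are invariant under rotation). *)
Definition dsingle (p : H * H) : bool := (p.1 != p.2) && (eps p.1 == eps p.2).

(* edge traversals of a closed walk: (h2,h3), (h4,h5), ..., (h_n,h_1),
   each traversed from its first to its second half-edge *)
Definition trav (W : seq (H * H)) : seq (H * H) :=
  [seq (p.1.2, p.2.1) | p <- zip W (rot 1 W)].

Definition closed_walk (W : seq (H * H)) : bool :=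
  all dsingle W && all (fun q => [set q.1; q.2] \in Ed) (trav W).

Definition hedges (W : seq (H * H)) : seq H := flatten [seq [:: p.1; p.2] | p <- W].

Definition oriented_circuit (W : seq (H * H)) : bool :=
  [&& closed_walk W, W != [::] & uniq (hedges W)].

Definition sigma (D : {set H}) (W : seq (H * H)) (e : {set H}) : rat :=
  (count (fun q => ([set q.1; q.2] == e) && (q.1 \in D)) (trav W))%:R
  - (count (fun q => ([set q.1; q.2] == e) && (q.1 \notin D)) (trav W))%:R.

(* An oriented Euler system: one oriented Eulerian circuit per component.
   Every half-edge occurs exactly once overall, and each component is met by
   exactly one circuit of C. *)
Definition euler_system (C : seq (seq (H * H))) : Prop :=
  [/\ forall W, W \in C -> oriented_circuit W,
      perm_eq (flatten [seq hedges W | W <- C]) (enum H)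
    & forall v, count (fun W => has (fun p => connect adj (eps p.1) v) W) C = 1].

(* W' is (a representative, up to cyclic shift, of) the oriented circuit
   induced by C at v based on E: choose the Euler circuit W of C, rotate it (R) so
   that its first transition p0 = W'_0 is at v, let pk = W'_k be the other transition at v;
   the segment from v back to v is the closed walk
   (fst W'_k, snd W'_0), W'_1, ..., W'_{k-1}; it must not traverse the edge
   of E in the component of v. *)
Definition induced_circuit (E : {set {set H}}) (C : seq (seq (H * H)))
    (v : V) (W' : seq (H * H)) : Prop :=
  exists W, W \in C /\ exists r k p0 pk,
    let R := rot r W in
    [/\ (0 < k < size R)%N,
        ohead R = Some p0 /\ ohead (drop k R) = Some pk,
        eps p0.1 = v /\ eps pk.1 = v,
        W' = (pk.1, p0.2) :: take k.-1 (drop 1 R)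
      & forall e0, e0 \in E -> edge_in_comp e0 v ->
          all (fun q => [set q.1; q.2] != e0) (trav W')].

Definition CM (D : {set H}) (Gam : V -> seq (H * H)) (v : V) (e : {set H}) : rat :=
  sigma D (Gam v) e.

Definition trans_at (t : {set {set H}}) (v : V) : bool :=
  partition t (hat v) && [forall b in t, #|b| == 2].

Definition is_transition (t : {set {set H}}) : bool := [exists v, trans_at t v].

Definition trans_orientation (o : {set {set H}} -> {set H}) : Prop :=
  forall t, is_transition t -> o t \in t.

Definition Delta (D : {set H}) (o : {set {set H}} -> {set H})
    (e : {set H}) (t : {set {set H}}) : rat :=
  if [exists h in D, e :&: o t == [set h]] then 1
  else if [exists h in ~: D, e :&: o t == [set h]] then -1 else 0.

Definition CMDelta (D : {set H}) (Gam : V -> seq (H * H))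
    (o : {set {set H}} -> {set H}) (v : V) (t : {set {set H}}) : rat :=
  \sum_(e in Ed) CM D Gam v e * Delta D o e t.

Definition transversalT (T : {set {set {set H}}}) : Prop :=
  (forall t, t \in T -> is_transition t) /\
  forall v, #|[set t in T | trans_at t v]| = 1.

Definition tcol (T : {set {set {set H}}}) (v : V) : option {set {set H}} :=
  [pick t in T | trans_at t v].

(* the square submatrix of CM * Delta formed by the columns in T
   (rows and columns ordered via the enumeration of V; the column of the
   transition of T at vertex v comes in position v) *)
Definition subCMDelta (D : {set H}) (Gam : V -> seq (H * H))
    (o : {set {set H}} -> {set H}) (T : {set {set {set H}}}) : 'M[rat]_#|V| :=
  \matrix_(i, j) match tcol T (enum_val j) with
                 | Some t => CMDelta D Gam o (enum_val i) t
                 | None => 0 end.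

End Graphs.

(* Main.v *)
Require Import Defs.
From mathcomp Require Import all_boot all_order all_algebra.
From mathcomp Require Import zify.
From Stdlib Require Import IndefiniteDescription.

Module TU.
Set Implicit Arguments. Unset Strict Implicit. Unset Printing Implicit Defensive.
Import GRing.Theory Num.Theory.
Local Open Scope ring_scope.

Definition tumx m n (a b : 'I_m -> option 'I_n) : 'M[rat]_(m, n) :=
  \matrix_(i, j) ((a i == Some j)%:R - (b i == Some j)%:R).

Lemma eq_Some (T : eqType) (x y : T) : (Some x == Some y) = (x == y).
Proof. by apply/eqP/eqP => [[]|->]. Qed.

Lemma obind_unlift m (j0 : 'I_m.+1) (o : option 'I_m.+1) l :
  (obind (unlift j0) o == Some l) = (o == Some (lift j0 l)).
Proof.
case: o => [x|] //=; rewrite eq_Some; case: (unliftP j0 x) => [y ->|->] /=.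
  by rewrite eq_Some (inj_eq (@lift_inj _ j0)).
by apply/esym/negbTE; rewrite neq_lift.
Qed.

Lemma sum_eqS m (o : option 'I_m) : \sum_k ((o == Some k)%:R : rat) = (o != None)%:R.
Proof.
case: o => [p|] /=; last by rewrite big1.
rewrite (bigD1 p) //= eqxx big1 ?addr0 // => k Hk.
by rewrite eq_Some eq_sym (negbTE Hk).
Qed.

Definition unit3 (x : rat) := x = -1 \/ x = 0 \/ x = 1.

Lemma unit3M x y : unit3 x -> unit3 y -> unit3 (x * y).
Proof.
by move=> [->|[->|->]] [->|[->|->]]; rewrite /unit3 ?mulN1r ?mul1r ?mulr0 ?mul0r ?opprK; auto.
Qed.

Lemma unit3N x : unit3 x -> unit3 (- x).
Proof. by move=> [->|[->|->]]; rewrite /unit3 ?opprK ?oppr0; auto. Qed.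

Lemma tu_det m (a b : 'I_m -> option 'I_m) : unit3 (\det (tumx a b)).
Proof.
elim: m a b => [|m IH] a b; first by rewrite det_mx00; right; right.
set A := tumx a b.
have [i Hi|Hall] := pickP (fun i => (a i == None) || (b i == None) || (a i == b i)).
- rewrite (expand_det_row _ i).
  have [Hab|Hab] := eqVneq (a i) (b i).
    rewrite big1; first by right; left.
    by move=> j _; rewrite /A mxE Hab subrr mul0r.
  have [j0 Hj0] : exists j0, forall j, A i j = if j == j0 then (if a i == Some j0 then 1 else -1) else 0.
    move: Hi; rewrite (negbTE Hab) orbF.
    case Ea: (a i) => [x|] /=; case Eb: (b i) => [y|] //= _.
    + exists x => j; rewrite /A mxE Ea Eb eqxx /=.
      by case: (eqVneq j x) => [->|Hn]; rewrite ?eqxx ?subr0 //= eq_Some eq_sym (negbTE Hn).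
    + exists y => j; rewrite /A mxE Ea Eb /=.
      by case: (eqVneq j y) => [->|Hn]; rewrite ?eqxx ?sub0r //= eq_Some eq_sym (negbTE Hn) oppr0.
    + by move: Hab; rewrite Ea Eb.
  rewrite (bigD1 j0) //= big1 ?addr0; last by move=> j Hj; rewrite Hj0; case: eqP Hj => [->|]; rewrite ?eqxx ?mul0r.
  rewrite Hj0 eqxx /cofactor.
  set B := row' i (col' j0 A).
  have -> : B = tumx (fun k => obind (unlift j0) (a (lift i k))) (fun k => obind (unlift j0) (b (lift i k))).
    apply/matrixP => k l; rewrite /B /A !mxE.
    by rewrite !obind_unlift.
  apply: unit3M; first by case: ifP => _; rewrite /unit3; auto.
  apply: unit3M; last exact: IH.
  by rewrite -signr_odd; case: (odd _); rewrite ?expr1 ?expr0 /unit3; auto.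
- right; left; rewrite -det_tr; apply/eqP/det0P; exists (const_mx 1).
    apply/eqP => /matrixP /(_ 0 (Ordinal (ltn0Sn m))); rewrite !mxE => /eqP.
    by rewrite oner_eq0.
  apply/matrixP => x y; rewrite !mxE.
  under eq_bigr do rewrite !mxE mul1r.
  rewrite sumrB !sum_eqS.
  move: (Hall y) => /=; case: (a y) => [p|]; case: (b y) => [q|] //= _.
Qed.

End TU.
Import TU.

Module CoreM.
Set Implicit Arguments. Unset Strict Implicit. Unset Printing Implicit Defensive.
Import GRing.Theory Num.Theory.
Local Open Scope ring_scope.

Lemma split_l m n (j : 'I_m) : split (lshift n j) = inl j.
Proof. exact: (@unsplitK m n (inl j)). Qed.
Lemma split_r m n (j : 'I_n) : split (rshift m j) = inr j.
Proof. exact: (@unsplitK m n (inr j)). Qed.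

Lemma sum_eqSf m (o : option 'I_m) (f : 'I_m -> rat) :
  \sum_k ((o == Some k)%:R * f k) = if o is Some x then f x else 0.
Proof.
case: o => [p|] /=; last by rewrite big1 // => k _; rewrite mul0r.
rewrite (bigD1 p) //= eqxx mul1r big1 ?addr0 // => k Hk.
by rewrite eq_Some eq_sym (negbTE Hk) mul0r.
Qed.

Lemma tumx_mull m n p (a b : 'I_m -> option 'I_n) (R : 'M[rat]_(n, p)) i c :
  (tumx a b *m R) i c = (if a i is Some x then R x c else 0) - (if b i is Some x then R x c else 0).
Proof.
rewrite mxE; under eq_bigr do rewrite mxE mulrBl.
by rewrite sumrB !sum_eqSf.
Qed.

Lemma tumxE m n (a b : 'I_m -> option 'I_n) i j :
  tumx a b i j = (a i == Some j)%:R - (b i == Some j)%:R.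
Proof. by rewrite mxE. Qed.

Section Core.
Variables (n : nat) (atv : nat -> 'I_n) (ci co : nat -> bool) (ii jj : 'I_n -> 'I_(n+n)).
Hypotheses (Hlt : forall v, (ii v < jj v)%N) (Hai : forall v, atv (ii v) = v)
  (Haj : forall v, atv (jj v) = v).
Local Notation N := (n + n)%N.

Definition col (x : 'I_n) (b : bool) : 'I_N := if b then rshift n x else lshift n x.
Definition Fn (g : nat) (c : 'I_N) : rat :=
  (if g is g'.+1 then (col (atv g') (co g') == c)%:R else 0) - (col (atv g) (ci g) == c)%:R.

Lemma ii_inj : injective ii.
Proof. by move=> v w E; rewrite -(Hai v) E Hai. Qed.
Lemma jj_inj : injective jj.
Proof. by move=> v w E; rewrite -(Haj v) E Haj. Qed.
Lemma ii_jj v w : ii v != jj w.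
Proof.
apply/eqP => E; have Evw : v = w by rewrite -(Hai v) E Haj.
by move: (Hlt v); rewrite E Evw ltnn.
Qed.

Lemma surj (l : 'I_N) : exists v, l = ii v \/ l = jj v.
Proof.
pose f (x : 'I_n + 'I_n) := match x with inl v => ii v | inr v => jj v end.
have finj : injective f.
  case=> [v|v] [w|w] /= E.
  - by rewrite (ii_inj E).
  - by move: (ii_jj v w); rewrite E eqxx.
  - by move: (ii_jj w v); rewrite E eqxx.
  - by rewrite (jj_inj E).
have : l \in codom f by apply: inj_card_onto => //; rewrite card_sum !card_ord.
case/codomP => [[v|v] ->]; by exists v; auto.
Qed.

Lemma at_iff (l : 'I_N) u : (atv l == u) = (l == ii u) || (l == jj u).
Proof.
have [v [->|->]] := surj l.
- rewrite Hai (inj_eq ii_inj); case: eqP => [->|_] //=.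
  by apply/esym/negbTE; rewrite ii_jj.
- rewrite Haj (inj_eq jj_inj) orbC; case: eqP => [->|_] //=.
  by apply/esym/negbTE; rewrite eq_sym ii_jj.
Qed.

Lemma col_sum x b u : (col x b == lshift n u)%:R + (col x b == rshift n u)%:R = (x == u)%:R :> rat.
Proof. by case: b; rewrite /col !eq_shift ?addr0 ?add0r. Qed.

Lemma telescope (l : nat) u :
  \sum_(0 <= g < l.+1) (Fn g (lshift n u) + Fn g (rshift n u)) = - (atv l == u)%:R.
Proof.
elim: l => [|l IH].
  rewrite big_nat1 /Fn !sub0r -opprD col_sum //.
rewrite big_nat_recr //= IH /Fn.
rewrite addrACA col_sum -opprD col_sum.
by rewrite addrA addNr add0r.
Qed.

Definition aF (g : 'I_N) := if (g : nat) is g'.+1 then Some (col (atv g') (co g')) else None.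
Definition bF (g : 'I_N) := Some (col (atv g) (ci g)).
Definition Fm := tumx aF bF.

Lemma FmE g c : Fm g c = Fn g c.
Proof.
rewrite /Fm /tumx mxE /aF /bF /Fn eq_Some; congr (_ - _).
by case: (g : nat) => [|g'] //=; rewrite eq_Some.
Qed.

Definition Lmat : 'M[rat]_N := \matrix_(l, g) ((g <= l)%N)%:R.

Lemma det_Lmat : \det Lmat = 1.
Proof.
rewrite det_trig; last by apply/is_trig_mxP => i j Hij; rewrite mxE leqNgt Hij.
by rewrite big1 // => i _; rewrite mxE leqnn.
Qed.

Definition Ym := Lmat *m Fm.

Lemma Yn (l : 'I_N) c : Ym l c = \sum_(0 <= g < l.+1) Fn g c.
Proof.
rewrite mxE; under eq_bigr do rewrite mxE FmE.
rewrite -(big_mkord xpredT (fun g => (g <= l)%:R * Fn g c)).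
rewrite (big_cat_nat _ (n := l.+1)) //=.
rewrite [X in _ + X]big_nat_cond [X in _ + X]big1 ?addr0; last first.
  by move=> g /andP[/andP[H1 _] _]; rewrite leqNgt H1 mul0r.
rewrite big_nat_cond [RHS]big_nat_cond; apply: eq_bigr => g /andP[/andP[_ H] _].
by rewrite ltnS in H; rewrite H mul1r.
Qed.

Definition aB (r : 'I_N) := if split r is inl j then Some (lshift n j) else None.
Definition bB (r : 'I_N) := Some (rshift n (match split r with inl j => j | inr j => j end)).
Definition Bm := tumx aB bB.

Lemma YBl (l : 'I_N) w : (Ym *m Bm) l (lshift n w) = Ym l (lshift n w).
Proof.
rewrite mxE big_split_ord /=.
rewrite (bigD1 w) //= big1 ?addr0; last first.
  move=> j Hj; rewrite /Bm tumxE /aB /bB split_l !eq_Some !eq_shift /= (negbTE Hj).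
  by rewrite ?subrr ?subr0 ?sub0r ?oppr0 ?mulr0.
rewrite big1 ?addr0; last first.
  move=> j _; rewrite /Bm tumxE /aB /bB split_r !eq_Some !eq_shift /=.
  by rewrite ?subrr ?subr0 ?sub0r ?oppr0 ?mulr0.
by rewrite /Bm tumxE /aB /bB split_l !eq_Some !eq_shift /= eqxx subr0 mulr1.
Qed.

Lemma YBr (l : 'I_N) u : (Ym *m Bm) l (rshift n u) = (atv l == u)%:R.
Proof.
rewrite mxE big_split_ord /=.
rewrite (bigD1 u) //= big1 ?addr0; last first.
  move=> j Hj; rewrite /Bm tumxE /aB /bB split_l !eq_Some !eq_shift /= (negbTE Hj).
  by rewrite ?subrr ?subr0 ?sub0r ?oppr0 ?mulr0.
rewrite (bigD1 u) //= big1 ?addr0; last first.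
  move=> j Hj; rewrite /Bm tumxE /aB /bB split_r /= !eq_Some !eq_shift /= (negbTE Hj).
  by rewrite ?subrr ?subr0 ?sub0r ?oppr0 ?mulr0.
rewrite /Bm !tumxE /aB /bB split_l split_r /= !eq_Some !eq_shift eqxx.
rewrite sub0r !mulrN1 -opprD !Yn -big_split /= telescope opprK //.
Qed.

Definition aQ (r : 'I_N) := match split r with inl v => Some (jj v) | inr u => Some (ii u) end.
Definition bQ (r : 'I_N) := match split r with inl v => Some (ii v) | inr _ => None end.
Definition Qm := tumx aQ bQ.

Variable M : 'M[rat]_n.
Hypothesis HM : forall v w, M v w =
  \sum_(ii v <= l < jj v) ((col (atv l) (co l) == lshift n w)%:R
                           - (col (atv l.+1) (ci l.+1) == lshift n w)%:R).

Lemma core_det : unit3 (\det M).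
Proof.
set P := Qm *m (Ym *m Bm).
have ul : ulsubmx P = M.
  apply/matrixP => v w; rewrite [LHS]mxE [LHS]mxE /P tumx_mull /aQ /bQ split_l !YBl !Yn HM.
  rewrite (big_cat_nat _ (n := (ii v).+1) (m := 0) (p := (jj v).+1)) //=; last by rewrite ltnS ltnW.
  rewrite [X in X - _]addrC addrK big_add1 /=.
  by apply: eq_bigr => l _; rewrite /Fn.
have ur : ursubmx P = 0.
  apply/matrixP => v u; rewrite [LHS]mxE [LHS]mxE [RHS]mxE /P tumx_mull /aQ /bQ split_l !YBr Hai Haj.
  by rewrite subrr.
have dr : drsubmx P = 1%:M.
  apply/matrixP => v u; rewrite [LHS]mxE [LHS]mxE [RHS]mxE /P tumx_mull /aQ /bQ split_r !YBr Hai subr0.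
  by [].
have : \det P = \det M.
  by rewrite -(submxK P) ul ur dr det_lblock det1 mulr1.
rewrite /P !det_mulmx det_Lmat mul1r => <-.
apply: unit3M; first exact: tu_det.
apply: unit3M; exact: tu_det.
Qed.

End Core.

End CoreM.
Import CoreM.

Module G1.
Set Implicit Arguments. Unset Strict Implicit. Unset Printing Implicit Defensive.
Import GRing.Theory Num.Theory.


Lemma nth_rot (T : Type) (x0 : T) s r i : (r <= size s)%N -> (i < size s)%N ->
  nth x0 (rot r s) i = nth x0 s ((r + i) %% size s).
Proof.
move=> Hr Hi; rewrite /rot nth_cat size_drop.
case: ltnP => H.
  by rewrite nth_drop modn_small //; lia.
rewrite nth_take; last by lia.
have -> : r + i = (i - (size s - r)) + size s by lia.
by rewrite modnDr modn_small //; lia.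
Qed.

Section G.
Variable H : finType.

Lemma size_trav (s : seq (H * H)) : size (trav s) = size s.
Proof. by rewrite /trav size_map size_zip size_rot minnn. Qed.

Lemma nth_trav (s : seq (H * H)) d p i : (i < size s)%N ->
  nth d (trav s) i = ((nth p s i).2, (nth p s (i.+1 %% size s)).1).
Proof.
move=> Hi; rewrite /trav (nth_map (p, p)); last by rewrite size_zip size_rot minnn.
rewrite nth_zip ?size_rot //= nth_rot //; last by case: (size s) Hi.
Qed.

Lemma hedges_trav (s : seq (H * H)) h : h \in hedges s ->
  exists2 q, q \in trav s & h = q.1 \/ h = q.2.
Proof.
case/flattenP => l /mapP [p Hp ->]; rewrite !inE => Hh.
have [x0 _] : exists x0 : H * H, True by exists p.
have Hs : (0 < size s)%N by case: (s) Hp.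
have [x Hx Ep] : exists2 x, (x < size s)%N & p = nth x0 s x.
  by exists (index p s); rewrite ?index_mem ?nth_index.
case/orP: Hh => /eqP ->.
- set y := (x + (size s).-1) %% size s.
  have Hy : (y < size s)%N by rewrite ltn_pmod.
  exists (nth x0 (trav s) y); first by rewrite mem_nth // size_trav.
  right; rewrite (nth_trav _ x0) //= Ep; congr (nth _ _ _).1.
  rewrite /y -addn1 modnDml -addnA addn1 prednK // modnDr modn_small //.
- exists (nth x0 (trav s) x); first by rewrite mem_nth // size_trav.
  by left; rewrite (nth_trav _ x0) // Ep.
Qed.

End G.

Section G2.
Local Open Scope ring_scope.
Variable H : finType.
Implicit Types (a b h : H) (S P : {set H}).

Lemma set1I' a S : [set a] :&: S = if a \in S then [set a] else set0.
Proof.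
apply/setP => x; case Ha: (a \in S); rewrite !inE //;
  case: eqP => [->|] //=; rewrite ?Ha ?andbT //.
Qed.

Lemma setI2 a b S : [set a; b] :&: S =
  (if a \in S then [set a] else set0) :|: (if b \in S then [set b] else set0).
Proof. by rewrite setIUl !set1I'. Qed.

Lemma ex1 P x : [exists h in P, [set x] == [set h]] = (x \in P).
Proof.
apply/existsP/idP => [[h /andP[hP /eqP/set1_inj ->]]|xP] //.
by exists x; rewrite xP eqxx.
Qed.

Lemma ex2 P a b : a != b -> [exists h in P, [set a; b] == [set h]] = false.
Proof.
move=> Hab; apply/existsP => [[h /andP[_ /eqP E]]].
have : a \in [set h] by rewrite -E !inE eqxx.
have : b \in [set h] by rewrite -E !inE eqxx orbT.
by rewrite !inE => /eqP Eb /eqP Ea; rewrite Ea Eb eqxx in Hab.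
Qed.

Lemma ex0 P : [exists h in P, (set0 : {set H}) == [set h]] = false.
Proof.
apply/existsP => [[h /andP[_ /eqP E]]].
have : h \in [set h] by rewrite inE.
by rewrite -E inE.
Qed.

Lemma delta_val (D : {set H}) (o : {set {set H}} -> {set H}) t a b :
  a != b -> (b \in D) = ~~ (a \in D) ->
  (if a \in D then 1 else -1) * Delta D o [set a; b] t = ((a \in o t)%:R - (b \in o t)%:R : rat).
Proof.
move=> Hab HbD; rewrite /Delta setI2.
case Ha: (a \in o t); case Hb: (b \in o t); rewrite ?setU0 ?set0U.
- by rewrite -/([set a; b]) !ex2 // subrr mulr0.
- rewrite !ex1 inE; case: (a \in D) => /=.
    by rewrite mul1r subr0.
  by rewrite mulN1r subr0 opprK.
- rewrite !ex1 inE HbD; case: (a \in D) => /=.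
    by rewrite sub0r mul1r.
  by rewrite sub0r mulN1r.
- by rewrite !ex0 subrr mulr0.
Qed.

End G2.

Section G3.
Local Open Scope ring_scope.

Lemma natr_count (T : eqType) (p : pred T) (s : seq T) :
  (count p s)%:R = \sum_(q <- s) ((p q)%:R : rat).
Proof. by elim: s => [|x s IH]; rewrite ?big_nil ?big_cons //= natrD IH. Qed.

Lemma D_other (H : finType) (D : {set H}) a b : a != b -> #|[set a; b] :&: D| = 1%N ->
  (b \in D) = ~~ (a \in D).
Proof.
move=> Hab; rewrite setI2.
case: (a \in D); case: (b \in D); rewrite ?setU0 ?set0U ?cards1 ?cards0 //.
by rewrite -/([set a; b]) cards2 Hab.
Qed.

Lemma andsign (A B : bool) : (A && B)%:R - (A && ~~ B)%:R = A%:R * (if B then 1 else -1) :> rat.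
Proof. by case: A; case: B; rewrite /= ?subr0 ?sub0r ?mul1r ?mul0r ?subrr. Qed.

Lemma CMD (V H : finType) (Ed : {set {set H}}) (D : {set H}) (Gam : V -> seq (H * H)) o v t :
  (forall e, e \in Ed -> #|e :&: D| = 1%N) -> (forall e, e \in Ed -> #|e| = 2) ->
  (forall q, q \in trav (Gam v) -> [set q.1; q.2] \in Ed) ->
  CMDelta Ed D Gam o v t = \sum_(q <- trav (Gam v)) ((q.1 \in o t)%:R - (q.2 \in o t)%:R).
Proof.
move=> HD H2 Htr; rewrite /CMDelta /CM /sigma.
under eq_bigr => e _.
  rewrite !natr_count -sumrB big_distrl /=.
  under eq_bigr => q _ do rewrite andsign.
  over.
rewrite exchange_big /=; apply: eq_big_seq => q Hq.
rewrite (bigD1 [set q.1; q.2]) ?Htr //= eqxx mul1r big1 ?addr0; last first.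
  by move=> e /andP[_ /negbTE He]; rewrite eq_sym He mul0r mul0r.
have Hab : q.1 != q.2.
  by move: (H2 _ (Htr _ Hq)); rewrite cards2; case: (q.1 != q.2).
rewrite delta_val //.
exact: D_other (HD _ (Htr _ Hq)).
Qed.
End G3.

End G1.
Import G1.

Module G2.
Set Implicit Arguments. Unset Strict Implicit. Unset Printing Implicit Defensive.

Section PV.
Variables (V H : finType) (Ed : {set {set H}}) (eps : H -> V).
Hypotheses (HG : is_graph Ed) (H4 : four_regular eps).
Variables (E : {set {set H}}) (C : seq (seq (H * H))).
Hypotheses (HE : based Ed eps E) (HC : euler_system Ed eps C).
Variable (x0 : H).
Local Notation p0 := (x0, x0).

Lemma Ed2 e : e \in Ed -> #|e| = 2.
Proof. by case: HG => _; apply. Qed.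

Lemma Ed_eq e1 e2 h : e1 \in Ed -> e2 \in Ed -> h \in e1 -> h \in e2 -> e1 = e2.
Proof.
case: HG => /and3P[_ Htriv _] _ H1 H2 Hh1 Hh2.
by rewrite -(def_pblock Htriv H1 Hh1) (def_pblock Htriv H2 Hh2).
Qed.

Lemma Wcirc W : W \in C -> oriented_circuit Ed eps W.
Proof. by case: HC => H1 _ _; apply: H1. Qed.

Lemma Wds W p : W \in C -> p \in W -> eps p.1 = eps p.2.
Proof.
move/Wcirc => /and3P[/andP[/allP Hd _] _ _] /Hd /andP[_ /eqP] //.
Qed.

Lemma Wtr W q : W \in C -> q \in trav W -> [set q.1; q.2] \in Ed.
Proof.
by move/Wcirc => /and3P[/andP[_ /allP Ht] _ _] /Ht.
Qed.

Lemma Wne W : W \in C -> W != [::].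
Proof. by move/Wcirc => /and3P[]. Qed.

Lemma pair_ne (a b : H) : [set a; b] \in Ed -> a != b.
Proof. by move/Ed2; rewrite cards2; case: (a != b). Qed.

Lemma adj_sym : symmetric (adj Ed eps).
Proof.
suff S : forall u w, adj Ed eps u w -> adj Ed eps w u.
  by move=> u w; apply/idP/idP; apply: S.
move=> u w /existsP [e /andP [He /existsP [h /andP [Hh /existsP [h' /andP [Hh' /and3P [Hne Hu Hw]]]]]]].
apply/existsP; exists e; rewrite He /=; apply/existsP; exists h'; rewrite Hh' /=.
by apply/existsP; exists h; rewrite Hh /= eq_sym Hne Hu Hw.
Qed.

Lemma Wconn0 W x : W \in C -> (x < size W)%N ->
  connect (adj Ed eps) (eps (nth p0 W 0).1) (eps (nth p0 W x).1).
Proof.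
move=> HW; elim: x => [|x IH] Hx; first exact: connect0.
apply: connect_trans (IH (ltnW Hx)) _; apply: connect1.
have Hq := nth_trav p0 p0 (ltnW Hx).
have Hmem : nth p0 (trav W) x \in trav W by rewrite mem_nth // size_trav ltnW.
have Hset := Wtr HW Hmem; rewrite Hq /= modn_small // in Hset.
apply/existsP; exists [set (nth p0 W x).2; (nth p0 W x.+1).1]; rewrite Hset /=.
apply/existsP; exists (nth p0 W x).2; rewrite !inE eqxx /=.
apply/existsP; exists (nth p0 W x.+1).1; rewrite !inE eqxx orbT /=.
rewrite (pair_ne Hset) /= -(Wds HW (mem_nth _ (ltnW Hx))) !eqxx //.
Qed.

Lemma Wconn W x y : W \in C -> (x < size W)%N -> (y < size W)%N ->
  connect (adj Ed eps) (eps (nth p0 W x).1) (eps (nth p0 W y).1).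
Proof.
move=> HW Hx Hy; apply: connect_trans (Wconn0 HW Hy).
by rewrite (sym_connect_sym adj_sym); apply: Wconn0.
Qed.

Lemma count1_eq (T : eqType) (P : pred T) s x y :
  count P s = 1%N -> x \in s -> y \in s -> P x -> P y -> x = y.
Proof.
rewrite -size_filter; case Ef: (filter P s) => [|z [|]] //= _ Hx Hy Px Py.
have : x \in filter P s by rewrite mem_filter Px.
have : y \in filter P s by rewrite mem_filter Py.
by rewrite Ef !inE => /eqP -> /eqP ->.
Qed.

Lemma HasCut W p v : W \in C -> p \in W -> eps p.1 = v ->
  has (fun q => [set q.1; q.2] \in E) (trav W).
Proof.
move=> HW Hp Hv; case: HE => Hsub Hb.
have /eqP/cards1P [e0 Ee0] := Hb v.
have : e0 \in [set e in E | edge_in_comp Ed eps e v] by rewrite Ee0 inE.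
rewrite inE => /andP [He0 /existsP [h /andP [Hh Hconn]]].
case: HC => _ Hperm Hcount.
have : h \in flatten [seq hedges W0 | W0 <- C] by rewrite (perm_mem Hperm) mem_enum.
case/flattenP => s /mapP [W' HW' ->] Hhs.
have [p' Hp' Ep'] : exists2 p', p' \in W' & eps p'.1 = eps h.
  case/flattenP: Hhs => l /mapP [p'' Hp'' ->]; rewrite !inE => /orP [] /eqP ->.
  - by exists p''.
  - by exists p''; rewrite // (Wds HW' Hp'').
have EW : W' = W.
  apply: (count1_eq (Hcount v)) => //.
  - by apply/hasP; exists p'; rewrite // Ep'.
  - by apply/hasP; exists p; rewrite // Hv connect0.
rewrite EW in Hhs.
have [q Hq Hhq] := hedges_trav Hhs.
apply/hasP; exists q => //.
have HqE := Wtr HW Hq.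
have He0Ed : e0 \in Ed by apply: (subsetP Hsub).
have -> : [set q.1; q.2] = e0.
  apply: (Ed_eq HqE He0Ed _ Hh).
  by case: Hhq => ->; rewrite !inE eqxx ?orbT.
by [].
Qed.

Definition cut (W : seq (H * H)) := find (fun q => [set q.1; q.2] \in E) (trav W).
Definition RW W := rot (cut W).+1 W.
Definition Pseq := flatten [seq RW W | W <- C].

Lemma Gam_nth (R : seq (H * H)) k (pa pb : H * H) j : (0 < k < size R)%N -> (j < k)%N ->
  nth p0 ((pb.1, pa.2) :: take k.-1 (drop 1 R)) j = if j == 0%N then (pb.1, pa.2) else nth p0 R j.
Proof.
move=> /andP [Hk0 HkR] Hj; case: j Hj => [|j] Hj //=.
by rewrite nth_take ?nth_drop //; lia.
Qed.

Lemma trav_Gam (R : seq (H * H)) k (pa pb : H * H) :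
  (0 < k < size R)%N -> nth p0 R 0 = pa -> nth p0 R k = pb ->
  trav ((pb.1, pa.2) :: take k.-1 (drop 1 R)) =
  [seq ((nth p0 R l).2, (nth p0 R l.+1).1) | l <- iota 0 k].
Proof.
move=> Hk Ea Eb; set G := (_ :: _).
have HsG : size G = k.
  rewrite /G /= size_take size_drop; case/andP: Hk => H1 H2.
  by rewrite (_ : (k.-1 < size R - 1)%N = true); lia.
apply: (@eq_from_nth _ p0); first by rewrite size_trav size_map size_iota.
move=> i; rewrite size_trav HsG => Hi.
rewrite (nth_trav p0 p0) ?HsG // (nth_map 0) ?size_iota // nth_iota // add0n.
rewrite (Gam_nth _ _ Hk Hi); congr (_, _).
  by case: eqP => [->|_] //=; rewrite -Ea.
have Hi1 : (i.+1 <= k)%N by [].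
rewrite leq_eqVlt in Hi1; case/orP: Hi1 => [/eqP Ei|Hi1].
- rewrite Ei modnn (Gam_nth _ _ Hk) /=; last by case/andP: Hk.
  by rewrite -Eb -Ei.
- by rewrite modn_small // (Gam_nth _ _ Hk Hi1).
Qed.

Lemma PV v (G : seq (H * H)) : induced_circuit Ed eps E C v G ->
  exists a b : nat, [/\ (a < b)%N, (b < size Pseq)%N, eps (nth p0 Pseq a).1 = v,
    eps (nth p0 Pseq b).1 = v &
    trav G = [seq ((nth p0 Pseq l).2, (nth p0 Pseq l.+1).1) | l <- iota a (b - a)] /\
    (forall q, q \in trav G -> [set q.1; q.2] \in Ed)].
Proof.
move=> [W [HW [r [k [pa [pb /= [Hk [Hpa Hpb] [Hva Hvb] HGv Havoid]]]]]]].
set R := rot r W in Hk Hpa Hpb HGv.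
set m := size W.
have HRm : size R = m by rewrite size_rot.
rewrite HRm in Hk; case/andP: Hk => Hk0 Hkm.
have Hm : (0 < m)%N by lia.
set r' := minn r m.
have ER : R = rot r' W by rewrite /R rot_minn.
have nthR l : (l < m)%N -> nth p0 R l = nth p0 W ((r' + l) %% m).
  by move=> Hl; rewrite ER nth_rot // geq_minr.
have Epa : nth p0 R 0 = pa by move: Hpa; case: (R) => [|x s] //= [->].
have Epb : nth p0 R k = pb.
  by rewrite -[k]addn0 -nth_drop; move: Hpb; case: (drop k R) => [|x s] //= [->].
have HtG : trav G = [seq ((nth p0 R l).2, (nth p0 R l.+1).1) | l <- iota 0 k].
  by rewrite HGv; apply: trav_Gam; rewrite ?HRm ?Hk0.
have trW l : (l < k)%N -> ((nth p0 R l).2, (nth p0 R l.+1).1) = nth p0 (trav W) ((r' + l) %% m).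
  move=> Hl; rewrite (nth_trav p0 p0) ?ltn_pmod // nthR ?nthR //; try lia.
  by rewrite -/m -[((r' + l) %% m).+1]addn1 modnDml addn1 addnS.
have HtrEd q : q \in trav G -> [set q.1; q.2] \in Ed.
  rewrite HtG => /mapP [l]; rewrite mem_iota add0n => /andP [_ Hl] ->.
  rewrite trW //; apply: (Wtr HW); by rewrite mem_nth // size_trav ltn_pmod.
have HpaW : pa \in W by rewrite -Epa -(mem_rot r) -/R mem_nth // HRm.
have Hhas := HasCut HW HpaW Hva.
set c := cut W.
have Hc : (c < m)%N by rewrite /c /cut /m -(size_trav W) -has_find.
have HcE := nth_find p0 Hhas; rewrite -/(cut W) -/c in HcE.
set ec := [set (nth p0 (trav W) c).1; (nth p0 (trav W) c).2] in HcE.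
have Hcomp : edge_in_comp Ed eps ec v.
  apply/existsP; exists (nth p0 (trav W) c).1; rewrite !inE eqxx /=.
  rewrite (nth_trav p0 p0) //= -(Wds HW (mem_nth p0 Hc)) -Hva -Epa nthR //.
  by apply: Wconn => //; rewrite ltn_pmod.
have Hav := Havoid ec HcE Hcomp.
have Hnc l : (l < k)%N -> (r' + l) %% m != c.
  move=> Hl; apply/eqP => El.
  move/allP: Hav => /(_ ((nth p0 R l).2, (nth p0 R l.+1).1)).
  rewrite HtG map_f ?mem_iota ?add0n //= => /(_ isT).
  have [E1 E2] : (nth p0 R l).2 = (nth p0 (trav W) ((r' + l) %% m)).1 /\
     (nth p0 R l.+1).1 = (nth p0 (trav W) ((r' + l) %% m)).2 by rewrite -trW.
  by rewrite E1 E2 El eqxx.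
set i' := (r' + m - c.+1) %% m.
have Hi' : (i' < m)%N by rewrite ltn_pmod.
have Hid x : (c.+1 + (i' + x)) %% m = (r' + x) %% m.
  rewrite /i' addnCA modnDml.
  have -> : ((r' + m - c.+1) + (c.+1 + x) = (r' + x) + m)%N by lia.
  by rewrite modnDr.
have nthRW y : (y < m)%N -> nth p0 (RW W) y = nth p0 W ((c.+1 + y) %% m).
  by move=> Hy; rewrite /RW nth_rot.
have Hik : (i' + k < m)%N.
  rewrite ltnNge; apply/negP => Hge.
  have Hl : (m.-1 - i' < k)%N by lia.
  move: (Hnc _ Hl); rewrite -Hid.
  have -> : (c.+1 + (i' + (m.-1 - i')) = c + m)%N by lia.
  by rewrite modnDr modn_small // eqxx.
have nthR_RW l : (l <= k)%N -> nth p0 R l = nth p0 (RW W) (i' + l).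
  by move=> Hl; rewrite nthR ?nthRW ?Hid //; lia.
have [C1 [C2 EC]] : exists C1 C2, C = C1 ++ W :: C2.
  by move: HW; case/splitPr => C1 C2; exists C1, C2.
set off := size (flatten [seq RW W0 | W0 <- C1]).
have EP : Pseq = flatten [seq RW W0 | W0 <- C1] ++ (RW W ++ flatten [seq RW W0 | W0 <- C2]).
  by rewrite /Pseq EC map_cat flatten_cat.
have HsP : (off + m <= size Pseq)%N.
  have HsRW : size (RW W) = m by rewrite size_rot.
  by rewrite EP size_cat size_cat HsRW; lia.
have nthP y : (y < m)%N -> nth p0 Pseq (off + y) = nth p0 (RW W) y.
  move=> Hy; rewrite EP nth_cat ltnNge leq_addr /= addKn nth_cat.
  by rewrite /RW size_rot Hy.
exists (off + i')%N, (off + i' + k)%N; split.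
- lia.
- lia.
- by rewrite nthP // -(addn0 i') -nthR_RW // Epa.
- by rewrite -addnA nthP // -nthR_RW // Epb.
- split => //.
  rewrite HtG (_ : (off + i' + k - (off + i') = k)%N); last by lia.
  have -> : iota (off + i') k = map (addn (off + i')) (iota 0 k) by rewrite -iotaDl addn0.
  rewrite -map_comp; apply/eq_in_map => l.
  rewrite mem_iota add0n => /andP [_ Hl] /=.
  rewrite -addnA nthP; last by lia.
  rewrite -addnS nthP; last by lia.
  rewrite -addnS -!nthR_RW //; lia.
Qed.

Lemma card_H : #|H| = (4 * #|V|)%N.
Proof.
rewrite -sum1_card (partition_big eps xpredT) //=.
rewrite (eq_bigr (fun _ => 4%N)); first by rewrite sum_nat_const mulnC.
move=> v _; rewrite sum1_card; have := H4 v; by rewrite /hat cardsE.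
Qed.

Lemma size_hedges (W : seq (H * H)) : size (hedges W) = (2 * size W)%N.
Proof. by elim: W => [|p W IH] //=; rewrite IH; lia. Qed.

Lemma size_Pseq : size Pseq = (#|V| + #|V|)%N.
Proof.
case: HC => _ Hperm _.
have Hs : size (flatten [seq hedges W | W <- C]) = #|H| by rewrite (perm_size Hperm) -cardE.
have : size (flatten [seq hedges W | W <- C]) = (2 * size Pseq)%N.
  rewrite /Pseq; elim: (C) => [|W C' IH] //=.
  by rewrite size_cat size_cat IH size_hedges /RW size_rot; lia.
rewrite Hs card_H; lia.
Qed.

Lemma Pds l : (l < size Pseq)%N -> eps (nth p0 Pseq l).1 = eps (nth p0 Pseq l).2.
Proof.
move=> Hl; have := mem_nth p0 Hl; case/flattenP => s /mapP [W HW ->].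
by rewrite /RW mem_rot; apply: Wds.
Qed.

End PV.

End G2.
Import G2.

Local Open Scope ring_scope.

Theorem mainTheorem18 (V H : finType) (Ed : {set {set H}}) (eps : H -> V)
  (HG : is_graph Ed) (H4 : four_regular eps)
  (E : {set {set H}}) (HE : based Ed eps E)
  (C : seq (seq (H * H))) (HC : euler_system Ed eps C)
  (D : {set H}) (HD : directed_version Ed D)
  (o : {set {set H}} -> {set H}) (Ho : trans_orientation eps o)
  (Gam : V -> seq (H * H))
  (HGam : forall v, induced_circuit Ed eps E C v (Gam v))
  (T : {set {set {set H}}}) (HT : transversalT eps T) :
  let A := subCMDelta Ed eps D Gam o T in
  \det A = -1 \/ \det A = 0 \/ \det A = 1.
Proof.
move=> A; change (unit3 (\det A)).
have [Hn0|Hnpos] := posnP #|V|.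
  by clearbody A; move: A; rewrite Hn0 => A; rewrite det_mx00; right; right.
pose v0 := enum_val (Ordinal Hnpos).
have : hat eps v0 != set0 by rewrite -card_gt0; move: (H4 v0) => ->.
case/set0Pn => h0 _.
pose P := Pseq E C.
pose p0 := (h0, h0).
have HsP : size P = (#|V| + #|V|)%N := size_Pseq H4 E HC.
pose R v (ab : nat * nat) :=
  [/\ (ab.1 < ab.2)%N, (ab.2 < size P)%N, eps (nth p0 P ab.1).1 = v,
    eps (nth p0 P ab.2).1 = v &
    trav (Gam v) = [seq ((nth p0 P l).2, (nth p0 P l.+1).1) | l <- iota ab.1 (ab.2 - ab.1)] /\
    (forall q, q \in trav (Gam v) -> [set q.1; q.2] \in Ed)].
have Hex : forall v, exists ab, R v ab.
  move=> v; have [a [b [H1 H2 H3 H4' H5]]] := PV HG HE HC h0 (HGam v).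
  by exists (a, b).
have [f Hf] := functional_choice R Hex.
have Hii (x : 'I_#|V|) : ((f (enum_val x)).1 < #|V| + #|V|)%N.
  by case: (Hf (enum_val x)) => H1 H2 _ _ _; rewrite -HsP; lia.
have Hjj (x : 'I_#|V|) : ((f (enum_val x)).2 < #|V| + #|V|)%N.
  by case: (Hf (enum_val x)) => H1 H2 _ _ _; rewrite -HsP.
pose ii (x : 'I_#|V|) := Ordinal (Hii x).
pose jj (x : 'I_#|V|) := Ordinal (Hjj x).
pose atv l := enum_rank (eps (nth p0 P l).1).
pose t_of (x : 'I_#|V|) := odflt set0 (tcol eps T (enum_val x)).
pose So x := o (t_of x).
pose ci l := (nth p0 P l).1 \notin So (atv l).
pose co l := (nth p0 P l).2 \notin So (atv l).
apply: (@core_det #|V| atv ci co ii jj).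
- by move=> v; case: (Hf (enum_val v)).
- by move=> v; rewrite /atv /=; case: (Hf (enum_val v)) => _ _ -> _ _; rewrite enum_valK.
- by move=> v; rewrite /atv /=; case: (Hf (enum_val v)) => _ _ _ -> _; rewrite enum_valK.
move=> v w; rewrite /A /subCMDelta mxE.
have [t [Et [HtT Htw]]] : exists t, tcol eps T (enum_val w) = Some t /\ t \in T /\ trans_at eps t (enum_val w).
  rewrite /tcol; case: pickP => [t /andP [H1 H2]|Hn]; first by exists t.
  exfalso; case: HT => _ Hc; have := Hc (enum_val w).
  have -> : [set t in T | trans_at eps t (enum_val w)] = set0.
    by apply/setP => t; rewrite !inE; have := Hn t => /= ->.
  by rewrite cards0.
rewrite Et.
case: (Hf (enum_val v)) => Hab HbP Ha Hb [Htrav Htr].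
rewrite (@CMD V H Ed D Gam o (enum_val v) t _ _ Htr); first last.
- by move=> e He; case: HG => _ ->.
- by move=> e He; exact: HD e He.
rewrite Htrav big_map /index_iota /=.
apply: eq_big_seq => l; rewrite mem_iota subnKC ?(ltnW Hab) // => /andP [Hl1 Hl2].
have HlP : (l < size P)%N by apply: ltn_trans Hl2 HbP.
have Hl1P : (l.+1 < size P)%N by apply: leq_ltn_trans Hl2 HbP.
have colL (x : 'I_#|V|) b : (col x b == lshift #|V| w) = ~~ b && (x == w).
  by case: b; rewrite /col !eq_shift.
have oth : o t \in t.
  apply: Ho; apply/existsP; by exists (enum_val w).
have ohat h : h \in o t -> eps h = enum_val w.
  move=> Hh; case/andP: Htw => /and3P [/eqP Hcov _ _] _.
  have : h \in cover t by apply/bigcupP; exists (o t).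
  by rewrite Hcov inE => /eqP.
have Hkey h (x : 'I_#|V|) : enum_rank (eps h) = x -> (~~ (h \notin So x) && (x == w)) = (h \in o t).
  move=> Ex; rewrite negbK; case: eqP => [->|Hne]; first by rewrite andbT /So /t_of Et.
  rewrite andbF; apply/esym/negP => Hh; apply: Hne.
  by rewrite -Ex ohat // enum_valK.
rewrite !colL /co /ci !Hkey //.
by rewrite /atv (Pds HC).
Qed.
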